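(* Let $G$ be a very well-covered graph of girth at least $4$ (i.e., $G$ contains no triangle). Then the following are equivalent: (i) $\Psi(G)$ is a greedoid on $V(G)$; (ii) $G$ has a unique maximum matching (equivalently, since $G$ has a perfect matching, $G$ has a unique perfect matching).
   Context: All graphs are finite, simple, undirected. For $A\subseteq V(G)$, $N(A)=\{v\in V(G)-A: N(v)\cap A\neq\emptyset\}$ and $N[A]=A\cup N(A)$; $G[X]$ is the subgraph induced by $X$. A stable set is a set of pairwise non-adjacent vertices; $\alpha(G)$ is the maximum size of a stable set. $G$ is well-covered if all its maximal stable sets have the same cardinality, and very well-covered if it is well-covered, has no isolated vertices, and $|V(G)|=2\alpha(G)$. A set $A\subseteq V(G)$ is a local maximum stable set of $G$ if $A$ is a maximum stable set of $G[N[A]]$; $\Psi(G)$ denotes the family of all local maximum stable sets of $G$. A greedoid on a finite set $V$ is a non-empty family $\mathcal{F}\subseteq 2^V$ such that (Accessibility) every non-empty $X\in\mathcal{F}$ has an element $x\in X$ with $X-\{x\}\in\mathcal{F}$, and (Exchange) for all $X,Y\in\mathcal{F}$ with $|X|=|Y|+1$ there is $x\in X-Y$ with $Y\cup\{x\}\in\mathcal{F}$. *)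

(* Defs.v *)
(* A finite simple graph is a symmetric irreflexive
   relation e : rel T on a finite type T (vertex set V(G) = T). *)
From mathcomp Require Import all_boot.
Set Implicit Arguments. Unset Strict Implicit. Unset Printing Implicit Defensive.

Section Graph.
Variables (T : finType) (e : rel T).

Definition simple_graph : Prop := symmetric e /\ irreflexive e.

Definition nbhd (A : {set T}) : {set T} :=
  [set v | (v \notin A) && [exists a in A, e v a]].
Definition cnbhd (A : {set T}) : {set T} := A :|: nbhd A.

Definition stable (A : {set T}) : bool :=
  [forall x in A, forall y in A, ~~ e x y].

Definition alpha : nat := \max_(A : {set T} | stable A) #|A|.

Definition maximal_stable (A : {set T}) : bool :=
  stable A && [forall B : {set T}, (A \proper B) ==> ~~ stable B].

Definition well_covered : Prop :=
  forall A B : {set T}, maximal_stable A -> maximal_stable B -> #|A| = #|B|.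

Definition no_isolated : Prop := forall v : T, exists u : T, e v u.

Definition very_well_covered : Prop :=
  [/\ well_covered, no_isolated & #|T| = 2 * alpha].

Definition triangle_free : Prop :=
  forall x y z : T, ~ [&& e x y, e y z & e x z].

(* A is a local maximum stable set: a maximum stable set of G[N[A]] *)
Definition local_max_stable (A : {set T}) : bool :=
  stable A && [forall B : {set T},
     ((B \subset cnbhd A) && stable B) ==> (#|B| <= #|A|)].

Definition Psi : {set {set T}} := [set A | local_max_stable A].

Definition is_edge (f : {set T}) : bool :=
  [exists x, exists y, e x y && (f == [set x; y])].

Definition matching (M : {set {set T}}) : bool :=
  [forall f in M, is_edge f] &&
  [forall f in M, forall g in M, (f != g) ==> [disjoint f & g]].

Definition maximum_matching (M : {set {set T}}) : bool :=
  matching M && [forall M' : {set {set T}}, matching M' ==> (#|M'| <= #|M|)].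

Definition unique_maximum_matching : Prop :=
  exists M, maximum_matching M /\ forall M', maximum_matching M' -> M' = M.

End Graph.

Definition greedoid (T : finType) (F : {set {set T}}) : Prop :=
  [/\ F != set0,
      (forall X, X \in F -> X != set0 -> exists2 x, x \in X & X :\ x \in F) &
      (forall X Y, X \in F -> Y \in F -> #|X| = #|Y|.+1 ->
         exists2 x, x \in X :\: Y & x |: Y \in F)].

(* Main.v *)
Require Import Defs.
From mathcomp Require Import all_boot.
Set Implicit Arguments. Unset Strict Implicit. Unset Printing Implicit Defensive.

Lemma stableP (T : finType) (e : rel T) (A : {set T}) :
  reflect (forall x y, x \in A -> y \in A -> ~~ e x y) (stable e A).
Proof.
apply: (iffP forall_inP) => H.
  by move=> x y xA yA; move/forall_inP: (H x xA); apply.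
by move=> x xA; apply/forall_inP => y yA; apply: H.
Qed.

Lemma stable_sub (T : finType) (e : rel T) (A B : {set T}) :
  A \subset B -> stable e B -> stable e A.
Proof.
move=> sAB /stableP H; apply/stableP => x y xA yA.
by apply: H; apply: (subsetP sAB).
Qed.

Lemma stable0 (T : finType) (e : rel T) : stable e set0.
Proof. by apply/stableP => x y; rewrite inE. Qed.

Lemma alpha_ge (T : finType) (e : rel T) (B : {set T}) :
  stable e B -> #|B| <= alpha e.
Proof. by move=> sB; apply: (@leq_bigmax_cond _ (stable e) (fun A => #|A|)). Qed.

Lemma alpha_attained (T : finType) (e : rel T) :
  exists2 S, stable e S & #|S| = alpha e.
Proof.
have h : 0 < #|stable e|.
  by apply/card_gt0P; exists set0; apply: stable0.
have [S SS eqS] := @eq_bigmax_cond _ (stable e) (fun A => #|A|) h.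
by exists S => //; rewrite /alpha eqS.
Qed.

Lemma maximal_ext (T : finType) (e : rel T) (X : {set T}) :
  stable e X -> exists2 W, maximal_stable e W & X \subset W.
Proof.
move=> sX; have [W mW XW] := @maxset_exists _ (stable e) X sX.
exists W => //; move/maxsetP: mW => [sW HW].
apply/andP; split => //; apply/forallP => B; apply/implyP => pWB.
apply/negP => sB; have eqB := HW B sB (proper_sub pWB).
by move: pWB; rewrite eqB properE subxx.
Qed.

Lemma maximal_stable_card (T : finType) (e : rel T) (W : {set T}) :
  well_covered e -> maximal_stable e W -> #|W| = alpha e.
Proof.
move=> wc mW; have [S sS cS] := alpha_attained e.
have mS : maximal_stable e S.
  apply/andP; split => //; apply/forallP => B; apply/implyP => pSB.
  apply/negP => sB; have := alpha_ge sB; rewrite -cS.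
  by rewrite leqNgt (proper_card pSB).
by rewrite (wc _ _ mW mS).
Qed.

Lemma dsjP (T : finType) (A B : {set T}) :
  reflect (forall x, x \in A -> x \in B -> False) [disjoint A & B].
Proof.
rewrite disjoints_subset; apply: (iffP subsetP) => H x xA.
  by move=> xB; move: (H x xA); rewrite inE xB.
by rewrite inE; apply/negP => xB; apply: (H x).
Qed.

Lemma set2_eq (T : finType) (x y a b : T) :
  [set x; y] = [set a; b] -> (x = a /\ y = b) \/ (x = b /\ y = a).
Proof.
move=> E.
have xab : x \in [set a; b] by rewrite -E set21.
have yab : y \in [set a; b] by rewrite -E set22.
have axy : a \in [set x; y] by rewrite E set21.
have bxy : b \in [set x; y] by rewrite E set22.
case/set2P: xab => ex; case/set2P: yab => ey; subst x y; auto.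
  by move: bxy; rewrite !inE orbb => /eqP ->; auto.
by move: axy; rewrite !inE orbb => /eqP ->; auto.
Qed.

Lemma edge_set2 (T : finType) (e : rel T) (x y : T) :
  symmetric e -> is_edge e [set x; y] -> e x y.
Proof.
move=> sym /existsP [a /existsP [b /andP [eab /eqP E]]].
by case: (set2_eq E) => [[-> ->]|[-> ->]]; rewrite // sym.
Qed.

Lemma edge_card (T : finType) (e : rel T) (f : {set T}) :
  irreflexive e -> is_edge e f -> #|f| = 2.
Proof.
move=> irr /existsP [a /existsP [b /andP [eab /eqP ->]]].
rewrite cards2; case: eqP => // eqab; by move: eab; rewrite eqab irr.
Qed.

Lemma matchingP (T : finType) (e : rel T) (M : {set {set T}}) :
  reflect ((forall f, f \in M -> is_edge e f) /\
           (forall f g, f \in M -> g \in M -> f != g -> [disjoint f & g]))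
          (matching e M).
Proof.
apply: (iffP andP) => [[/forall_inP H1 /forall_inP H2]|[H1 H2]]; split.
- exact: H1.
- by move=> f g fM gM; move/forall_inP: (H2 f fM) => /(_ g gM) /implyP.
- exact/forall_inP.
- apply/forall_inP => f fM; apply/forall_inP => g gM; apply/implyP; exact: H2.
Qed.

Lemma matching_card (T : finType) (e : rel T) (M : {set {set T}}) :
  irreflexive e -> matching e M -> 2 * #|M| = #|cover M|.
Proof.
move=> irr /matchingP [H1 H2].
have tr : trivIset M by apply/trivIsetP => A B AM BM; apply: H2.
rewrite -(eqP tr) mulnC -sum_nat_const; apply: eq_bigr => f fM.
by rewrite (edge_card irr (H1 f fM)).
Qed.

Lemma matching_le (T : finType) (e : rel T) (M : {set {set T}}) :
  irreflexive e -> matching e M -> 2 * #|M| <= #|T|.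
Proof. by move=> irr mM; rewrite (matching_card irr mM) max_card. Qed.

Lemma matching_eq (T : finType) (e : rel T) (M : {set {set T}}) (x y z : T) :
  simple_graph e -> matching e M -> [set x; y] \in M -> [set x; z] \in M -> y = z.
Proof.
move=> [sym irr] /matchingP [H1 H2] xyM xzM.
case: (eqVneq [set x; y] [set x; z]) => [E|ne].
  case: (set2_eq E) => [[_ //]|[exz eyx]].
  by move: (edge_set2 sym (H1 _ xyM)); rewrite eyx irr.
by move/dsjP: (H2 _ _ xyM xzM ne) => /(_ x); rewrite !set21 => /(_ isT isT).
Qed.

Lemma perfect_partner (T : finType) (e : rel T) (M : {set {set T}}) :
  simple_graph e -> matching e M -> cover M = setT ->
  exists m : T -> T, [/\ forall x, e x (m x), forall x, m (m x) = x
                        & M = [set [set x; m x] | x : T]].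
Proof.
move=> [sym irr] mM cM.
have ex : forall x, exists y, [set x; y] \in M.
  move=> x; have : x \in cover M by rewrite cM inE.
  move/bigcupP => [f fM xf]; have := (matchingP _ _ mM).1 f fM.
  move=> /existsP [a /existsP [b /andP [eab /eqP fE]]].
  move: xf; rewrite fE; case/set2P => ->.
    by exists b; rewrite -fE.
  by exists a; rewrite setUC -fE.
pose m x := odflt x [pick y | [set x; y] \in M].
have mM' : forall x, [set x; m x] \in M.
  move=> x; rewrite /m; case: pickP => [y //|H].
  by case: (ex x) => y; rewrite H.
have mmx : forall x, m (m x) = x.
  move=> x; apply: (matching_eq (conj sym irr) mM (mM' (m x))).
  by rewrite setUC mM'.
exists m; split => //.
  by move=> x; apply: (edge_set2 sym); apply: (matchingP _ _ mM).1.
apply/setP => f; apply/idP/imsetP => [fM|[x _ ->] //].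
have := (matchingP _ _ mM).1 f fM.
move=> /existsP [a /existsP [b /andP [eab /eqP fE]]].
exists a => //; rewrite fE; congr [set a; _].
by apply: (matching_eq (conj sym irr) mM _ (mM' a)); rewrite -fE.
Qed.

Lemma partner_matching (T : finType) (e : rel T) (m : T -> T) :
  simple_graph e -> (forall x, e x (m x)) -> (forall x, m (m x) = x) ->
  matching e [set [set x; m x] | x : T] /\ cover [set [set x; m x] | x : T] = setT.
Proof.
move=> [sym irr] em mm; split.
  apply/matchingP; split.
    move=> f /imsetP [x _ ->]; apply/existsP; exists x; apply/existsP; exists (m x).
    by rewrite em eqxx.
  move=> f g /imsetP [x _ ->] /imsetP [y _ ->] ne; apply/dsjP => z.
  case/set2P => ->; case/set2P => E.
  - by move: ne; rewrite E eqxx.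
  - by move: ne; rewrite E mm setUC eqxx.
  - by move: ne; rewrite -E mm setUC eqxx.
  - by move: ne; rewrite (can_inj mm E) eqxx.
apply/setP => x; rewrite inE; apply/bigcupP; exists [set x; m x].
  by apply: imset_f. by rewrite set21.
Qed.

Lemma perfect_maximum (T : finType) (e : rel T) (M : {set {set T}}) :
  irreflexive e -> matching e M -> cover M = setT -> maximum_matching e M.
Proof.
move=> irr mM cM; apply/andP; split => //; apply/forallP => M'; apply/implyP => mM'.
have := matching_le irr mM'; rewrite -cardsT -cM -(matching_card irr mM).
by rewrite leq_pmul2l.
Qed.

Lemma maximum_cover (T : finType) (e : rel T) (M M' : {set {set T}}) :
  irreflexive e -> matching e M -> cover M = setT -> maximum_matching e M' ->
  cover M' = setT.
Proof.
move=> irr mM cM /andP [mM' /forallP H].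
have le := implyP (H M) mM.
apply/eqP; rewrite eqEcard subsetT cardsT -(matching_card irr mM').
apply: leq_trans (_ : 2 * #|M| <= _); last by rewrite leq_pmul2l.
by rewrite (matching_card irr mM) cM cardsT.
Qed.

Lemma in_cnbhd (T : finType) (e : rel T) (A : {set T}) (y : T) :
  (y \in cnbhd e A) = (y \in A) || [exists a in A, e y a].
Proof. by rewrite /cnbhd /nbhd !inE; case: (y \in A). Qed.

Lemma cnbhdP (T : finType) (e : rel T) (A : {set T}) (y : T) :
  reflect (y \in A \/ exists2 a, a \in A & e y a) (y \in cnbhd e A).
Proof.
rewrite in_cnbhd; apply: (iffP orP) => [[->|/exists_inP [a aA eya]]|[->|[a aA eya]]]; auto.
  by right; exists a.
by right; apply/exists_inP; exists a.
Qed.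

Lemma stableU (T : finType) (e : rel T) (A B : {set T}) :
  symmetric e -> stable e A -> stable e B ->
  (forall a b, a \in A -> b \in B -> ~~ e a b) -> stable e (A :|: B).
Proof.
move=> sym /stableP sA /stableP sB H; apply/stableP => x y.
case/setUP => xA; case/setUP => yA; auto.
by rewrite sym; apply: H.
Qed.

Lemma stable1 (T : finType) (e : rel T) (x : T) :
  irreflexive e -> stable e [set x].
Proof. by move=> irr; apply/stableP => a b /set1P -> /set1P ->; rewrite irr. Qed.

Lemma local_maxP (T : finType) (e : rel T) (A : {set T}) :
  reflect (stable e A /\ forall B : {set T}, B \subset cnbhd e A -> stable e B -> #|B| <= #|A|)
          (local_max_stable e A).
Proof.
apply: (iffP andP) => [[sA /forallP H]|[sA H]]; split => //.
  by move=> B sub sB; move: (H B); rewrite sub sB.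
by apply/forallP => B; apply/implyP => /andP [sub sB]; apply: H.
Qed.

Lemma maximum_local (T : finType) (e : rel T) (S : {set T}) :
  stable e S -> #|S| = alpha e -> local_max_stable e S.
Proof.
move=> sS cS; apply/local_maxP; split => // B _ sB.
by rewrite cS; apply: alpha_ge.
Qed.

Lemma new_neighbor (T : finType) (e : rel T) (B : {set T}) (x : T) :
  simple_graph e -> well_covered e -> local_max_stable e B ->
  stable e (x |: B) -> x \notin B -> (exists u, e x u) ->
  exists2 y, e x y & y \notin cnbhd e B.
Proof.
move=> [sym irr] wc /local_maxP [sB lmB] sxB xB [u exu].
case: (boolP [exists y, e x y && (y \notin cnbhd e B)]).
  by move/existsP => [y /andP [exy ny]]; exists y.
move=> /existsPn Hn.
have Hx : forall y, e x y -> y \in cnbhd e B.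
  by move=> y exy; move: (Hn y); rewrite exy /= negbK.
have [W mW uW] := maximal_ext (stable1 u irr).
have cW := maximal_stable_card wc mW.
have sW : stable e W by case/andP: mW.
have uW' : u \in W by rewrite (subsetP uW) ?set11.
have xW : x \notin W.
  by apply/negP => xW; move/stableP: sW => /(_ x u xW uW'); rewrite exu.
pose R := W :\: cnbhd e B.
have sQ : stable e (x |: (B :|: R)).
  apply: stableU => //.
  - exact: stable1.
  - apply: stableU => //; first by apply: stable_sub sW; apply: subsetDl.
    move=> a r aB; rewrite inE => /andP [rnB _]; apply/negP => ear.
    move/negP: rnB; apply; rewrite in_cnbhd; apply/orP; right.
    by apply/exists_inP; exists a => //; rewrite sym.
  - move=> a b /set1P ->; case/setUP.
      by move=> bB; move: sxB => /stableP /(_ x b); rewrite setU11 inE bB orbT; apply.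
    rewrite inE => /andP [bB _]; apply/negP => exb.
    by move: bB; rewrite (Hx b exb).
have cQ := alpha_ge sQ.
have xBR : x \notin B :|: R.
  by rewrite inE negb_or xB inE negb_and (negbTE xW) orbT.
have BR : [disjoint B & R].
  by apply/dsjP => z zB; rewrite inE in_cnbhd zB.
rewrite cardsU1 xBR (cardsU B R) (disjoint_setI0 BR) cards0 subn0 in cQ.
have lW : #|W :&: cnbhd e B| <= #|B|.
  apply: lmB; first by apply: subsetIr.
  by apply: stable_sub sW; apply: subsetIl.
have eW := cardsID (cnbhd e B) W; rewrite cW in eW.
have h1 : alpha e <= #|B| + #|R| by rewrite -eW leq_add2r.
by move: (leq_trans cQ h1); rewrite add1n ltnn.
Qed.

Lemma in_Psi (T : finType) (e : rel T) (A : {set T}) :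
  (A \in Psi e) = local_max_stable e A.
Proof. by rewrite inE. Qed.

Lemma cnbhd_mono (T : finType) (e : rel T) (A B : {set T}) :
  A \subset B -> cnbhd e A \subset cnbhd e B.
Proof.
move=> sAB; apply/subsetP => z /cnbhdP [zA|[a aA eza]]; apply/cnbhdP.
  by left; apply: (subsetP sAB).
by right; exists a => //; apply: (subsetP sAB).
Qed.

Lemma greedoid_matching (T : finType) (e : rel T) :
  simple_graph e -> well_covered e -> no_isolated e -> greedoid (Psi e) ->
  forall n (A : {set T}), #|A| = n -> A \in Psi e ->
  exists M, [/\ matching e M, #|M| = #|A| & cover M \subset cnbhd e A].
Proof.
move=> [sym irr] wc noi [_ acc _].
elim=> [|n IH] A cA AP.
  exists set0; split.
  - by apply/matchingP; split => f; rewrite inE.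
  - by rewrite cards0 cA.
  - by apply/subsetP => z /bigcupP [f]; rewrite inE.
have A0 : A != set0 by rewrite -card_gt0 cA.
have [x xA BP] := acc A AP A0.
set B := A :\ x in BP.
have cB : #|B| = n by move: cA; rewrite (cardsD1 x A) xA add1n => [[]].
have [M [mM cM coM]] := IH B cB BP.
have eA : A = x |: B by rewrite setD1K.
have sA : stable e A by move: AP; rewrite in_Psi => /andP [].
have xB : x \notin B by rewrite setD11.
have xnB : x \notin cnbhd e B.
  rewrite in_cnbhd negb_or xB /=; apply/negP => /exists_inP [b bB exb].
  have bA : b \in A by move: bB; rewrite inE => /andP [].
  by move/stableP: sA => /(_ x b xA bA); rewrite exb.
have sxB : stable e (x |: B) by rewrite -eA.
have [y exy ynB] := new_neighbor (conj sym irr) wc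
   (etrans (esym (in_Psi _ _)) BP) sxB xB (noi x).
have yA : y \notin A.
  by apply/negP => yA; move/stableP: sA => /(_ x y xA yA); rewrite exy.
have xyM : [set x; y] \notin M.
  apply/negP => xyM; move/negP: xnB; apply; apply: (subsetP coM).
  by apply/bigcupP; exists [set x; y] => //; rewrite set21.
exists ([set x; y] |: M); split.
- apply/matchingP; split.
    move=> f /setU1P [->|fM]; last by apply: (matchingP _ _ mM).1.
    by apply/existsP; exists x; apply/existsP; exists y; rewrite exy eqxx.
  have dj : forall g, g \in M -> [disjoint [set x; y] & g].
    move=> g gM; apply/dsjP => z /set2P [->|->] zg.
      by move/negP: xnB; apply; apply: (subsetP coM); apply/bigcupP; exists g.
    by move/negP: ynB; apply; apply: (subsetP coM); apply/bigcupP; exists g.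
  move=> f g /setU1P [->|fM] /setU1P [->|gM] ne.
  + by move: ne; rewrite eqxx.
  + exact: dj.
  + by rewrite disjoint_sym; apply: dj.
  + by apply: (matchingP _ _ mM).2.
- by rewrite cardsU1 xyM cM cA cB.
- apply/subsetP => z /bigcupP [f /setU1P [->|fM] zf].
    case/set2P: zf => ->; apply/cnbhdP; first by left.
    by right; exists x => //; rewrite sym.
  apply: (subsetP (cnbhd_mono e (subsetDl A [set x]))).
  by apply: (subsetP coM); apply/bigcupP; exists f.
Qed.

Lemma greedoid_perfect (T : finType) (e : rel T) :
  simple_graph e -> very_well_covered e -> greedoid (Psi e) ->
  exists M, matching e M /\ cover M = setT.
Proof.
move=> sg [wc noi cT] gr.
have [S sS cS] := alpha_attained e.
have SP : S \in Psi e by rewrite in_Psi; apply: maximum_local.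
have [M [mM cM _]] := greedoid_matching sg wc noi gr (erefl _) SP.
exists M; split => //; apply/eqP; rewrite eqEcard subsetT cardsT cT.
by rewrite -(matching_card (proj2 sg) mM) cM cS leqnn.
Qed.

Lemma stable2 (T : finType) (e : rel T) (u v : T) :
  simple_graph e -> ~~ e u v -> stable e [set u; v].
Proof.
move=> [sym irr] nuv; apply/stableP => a b /set2P [->|->] /set2P [->|->];
  by rewrite ?irr // sym.
Qed.

Lemma max_meets (T : finType) (e : rel T) (m : T -> T) (W : {set T}) (x : T) :
  simple_graph e -> well_covered e -> #|T| = 2 * alpha e ->
  (forall x, e x (m x)) -> (forall x, m (m x) = x) ->
  maximal_stable e W -> (x \in W) || (m x \in W).
Proof.
move=> [sym irr] wc cT em mm mW.
have cW := maximal_stable_card wc mW.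
have sW : stable e W by case/andP: mW.
apply/negPn/negP; rewrite negb_or => /andP [xW mxW].
have dj : [disjoint W & m @: W].
  apply/dsjP => z zW /imsetP [w wW ez].
  by move/stableP: sW => /(_ w z wW zW); rewrite ez em.
have xmW : x \notin m @: W.
  apply/negP => /imsetP [w wW ex]; move/negP: mxW; apply.
  by rewrite ex mm.
have := max_card (x |: (W :|: m @: W)).
rewrite cardsU1 inE negb_or xW xmW /= cardsU (disjoint_setI0 dj) cards0 subn0.
by rewrite (card_imset _ (can_inj mm)) cW cT addnn -mul2n add1n ltnn.
Qed.

Lemma propP (T : finType) (e : rel T) (m : T -> T) (u v x : T) :
  simple_graph e -> well_covered e -> #|T| = 2 * alpha e ->
  (forall x, e x (m x)) -> (forall x, m (m x) = x) ->
  e u x -> e v (m x) -> e u v.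
Proof.
move=> sg wc cT em mm eux evmx; apply/negPn/negP => nuv.
have [W mW sub] := maximal_ext (stable2 sg nuv).
have sW : stable e W by case/andP: mW.
have uW : u \in W by rewrite (subsetP sub) ?set21.
have vW : v \in W by rewrite (subsetP sub) ?set22.
case/orP: (max_meets x sg wc cT em mm mW) => H.
  by move/stableP: sW => /(_ u x uW H); rewrite eux.
by move/stableP: sW => /(_ v (m x) vW H); rewrite evmx.
Qed.

Lemma count_pairs (T : finType) (e : rel T) (m : T -> T) (A B : {set T}) :
  (forall x, e x (m x)) -> (forall x, m (m x) = x) ->
  stable e B -> (forall b, b \in B -> (b \in A) || (m b \in A)) -> #|B| <= #|A|.
Proof.
move=> em mm sB H.
pose phi b := if b \in A then b else m b.
have inj : {in B &, injective phi}.
  move=> b c bB cB; rewrite /phi.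
  case: ifP => bA; case: ifP => cA.
  - by [].
  - move=> E; move/stableP: sB => /(_ c b cB bB).
    by rewrite E em.
  - move=> E; move/stableP: sB => /(_ b c bB cB).
    by rewrite -E em.
  - exact: (can_inj mm).
rewrite -(card_in_imset inj); apply: subset_leq_card.
apply/subsetP => z /imsetP [b bB ->]; rewrite /phi.
by case: ifP => // bA; move: (H b bB); rewrite bA.
Qed.

Lemma closed_psi (T : finType) (e : rel T) (m : T -> T) (A : {set T}) :
  symmetric e -> (forall x, e x (m x)) -> (forall x, m (m x) = x) ->
  stable e A -> (forall x y, x \in A -> e x y -> m y \in A) ->
  local_max_stable e A.
Proof.
move=> sym em mm sA cA; apply/local_maxP; split => // B sub sB.
apply: (count_pairs em mm sB) => b bB.
case/cnbhdP: (subsetP sub b bB) => [->//|[a aA eba]].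
by rewrite (cA a b aA) ?orbT // sym.
Qed.

Lemma psi_closed (T : finType) (e : rel T) (m : T -> T) (A : {set T}) (x y : T) :
  simple_graph e -> well_covered e -> #|T| = 2 * alpha e ->
  (forall x, e x (m x)) -> (forall x, m (m x) = x) ->
  local_max_stable e A -> x \in A -> e x y -> m y \in A.
Proof.
move=> sg wc cT em mm /local_maxP [sA lm] xA exy.
have [sym irr] := sg.
have P := fun u v z => @propP T e m u v z sg wc cT em mm.
apply/negPn/negP => myA.
have yA : y \notin A.
  by apply/negP => yA; move/stableP: sA => /(_ x y xA yA); rewrite exy.
pose X := [set a in A | e y a].
have XA : X \subset A by apply/subsetP => a; rewrite inE => /andP [].
have mXA : forall a, a \in A -> m a \notin A.
  by move=> a aA; apply/negP => maA; move/stableP: sA => /(_ a (m a) aA maA); rewrite em.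
pose B := ((A :\: X) :|: (m @: X)) :|: [set y].
have sub : B \subset cnbhd e A.
  apply/subsetP => z /setUP [/setUP [/setDP [zA _]|/imsetP [a aX ->]]|/set1P ->];
    apply/cnbhdP.
  - by left.
  - right; exists a; first by apply: (subsetP XA).
    by rewrite sym em.
  - by right; exists x => //; rewrite sym.
have sB1 : stable e ((A :\: X) :|: (m @: X)).
  apply: stableU => //.
  + by apply: stable_sub sA; apply: subsetDl.
  + apply/stableP => a b /imsetP [c cX ->] /imsetP [d dX ->].
    apply/negP => emcd.
    have eyc : e y c by move: cX; rewrite inE => /andP [].
    have eyd : e y d by move: dX; rewrite inE => /andP [].
    have := P y (m d) c eyc; rewrite sym emcd => /(_ isT) eymd.
    by have := P y y d eyd eymd; rewrite irr.
  + move=> a b /setDP [aA aX] /imsetP [c cX ->]; apply/negP => eamc.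
    have eyc : e y c by move: cX; rewrite inE => /andP [].
    have := P y a c eyc eamc => eya.
    by move/negP: aX; apply; rewrite inE aA eya.
have sB : stable e B.
  apply: stableU => //; first exact: stable1.
  move=> a b /setUP [/setDP [aA aX]|/imsetP [c cX ->]] /set1P ->.
    by apply/negP => eay; move/negP: aX; apply; rewrite inE aA sym.
  apply/negP => ecy; have eyc : e y c by move: cX; rewrite inE => /andP [].
  by have := P y y c eyc; rewrite (sym y (m c)) ecy irr => /(_ isT).
have := lm B sub sB.
have yB : y \notin (A :\: X) :|: m @: X.
  rewrite inE negb_or inE negb_and yA orbT /=.
  apply/negP => /imsetP [a aX ey]; move/negP: myA; apply.
  by rewrite ey mm; apply: (subsetP XA).
have dj : [disjoint A :\: X & m @: X].
  apply/dsjP => z /setDP [zA _] /imsetP [a aX ez].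
  by move/negP: (mXA a (subsetP XA a aX)); apply; rewrite -ez.
rewrite /B setUC cardsU1 yB cardsU (disjoint_setI0 dj) cards0 subn0.
rewrite (card_imset _ (can_inj mm)) cardsD (setIidPr XA) subnK ?subset_leq_card //.
by rewrite add1n ltnn.
Qed.

Lemma min_closed (T : finType) (s : T -> T) (Q : {set T}) :
  Q != set0 -> (forall x, x \in Q -> s x \in Q) ->
  exists C : {set T}, [/\ C \subset Q, C != set0 & s @: C = C].
Proof.
move: {2}#|Q| (leqnn #|Q|) => n; elim: n Q => [|n IH] Q cQ Q0 cl.
  by move: Q0; rewrite -card_gt0; case: #|Q| cQ.
have sub : s @: Q \subset Q by apply/subsetP => y /imsetP [x xQ ->]; apply: cl.
case: (eqVneq (s @: Q) Q) => [E|ne]; first by exists Q.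
have pr : s @: Q \proper Q by rewrite properEneq ne sub.
have [x xQ] : exists x, x \in Q by apply/set0Pn.
have c1 : #|s @: Q| <= n by rewrite -ltnS; apply: leq_trans (proper_card pr) cQ.
have c2 : s @: Q != set0 by apply/set0Pn; exists (s x); apply: imset_f.
have c3 : forall y, y \in s @: Q -> s y \in s @: Q.
  by move=> y /imsetP [z zQ ->]; apply: imset_f; apply: cl.
have [C [CQ C0 sC]] := IH (s @: Q) c1 c2 c3.
by exists C; split => //; apply: subset_trans CQ sub.
Qed.

Lemma pm_mem (T : finType) (m : T -> T) (f : {set T}) (z : T) :
  (forall x, m (m x) = x) -> f \in [set [set x; m x] | x : T] -> z \in f -> m z \in f.
Proof.
move=> mm /imsetP [w _ ->] /set2P [->|->]; first by rewrite set22.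
by rewrite mm set21.
Qed.

Lemma second_matching (T : finType) (e : rel T) (m u v : T -> T) (C : {set T}) :
  simple_graph e -> (forall x, e x (m x)) -> (forall x, m (m x) = x) ->
  stable e C -> C != set0 -> u @: C = C -> v @: C = C ->
  (forall x, x \in C -> (u x != v x) && e (u x) (m (v x))) ->
  exists M', [/\ matching e M', cover M' = setT &
                 M' != [set [set x; m x] | x : T]].
Proof.
move=> sg em mm sC C0 uC vC H.
have [sym irr] := sg.
set M0 := [set [set x; m x] | x : T].
have [mM0 cM0] := partner_matching sg em mm.
have uinj : {in C &, injective u} by apply/imset_injP; rewrite uC.
have vinj : {in C &, injective v} by apply/imset_injP; rewrite vC.
have uin : forall x, x \in C -> u x \in C by move=> x xC; rewrite -uC imset_f.
have vin : forall x, x \in C -> v x \in C by move=> x xC; rewrite -vC imset_f.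
have mC : forall x, x \in C -> m x \notin C.
  by move=> x xC; apply/negP => mxC; move/stableP: sC => /(_ x (m x) xC mxC); rewrite em.
set M1 := [set [set u x; m (v x)] | x in C].
set M2 := [set f in M0 | [disjoint f & C]].
exists (M1 :|: M2); split.
- apply/matchingP; split.
    move=> f /setUP [/imsetP [x xC ->]|].
      apply/existsP; exists (u x); apply/existsP; exists (m (v x)).
      by case/andP: (H x xC) => _ ->; rewrite eqxx.
    by rewrite inE => /andP [fM0 _]; apply: (matchingP _ _ mM0).1.
  have d12 : forall f g, f \in M1 -> g \in M2 -> [disjoint f & g].
    move=> f g /imsetP [x xC ->]; rewrite inE => /andP [gM0 dg].
    apply/dsjP => z /set2P [->|->] zg.
      by move/dsjP: dg => /(_ (u x) zg (uin x xC)).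
    have := pm_mem mm gM0 zg; rewrite mm => vg.
    by move/dsjP: dg => /(_ (v x) vg (vin x xC)).
  move=> f g /setUP [fM1|fM2] /setUP [gM1|gM2] ne.
  + move: fM1 gM1 ne => /imsetP [x xC ->] /imsetP [y yC ->] ne.
    have nxy : x != y by apply/negP => /eqP exy; move: ne; rewrite exy eqxx.
    apply/dsjP => z /set2P [->|->] /set2P E.
      case: E => E.
        by move: nxy; rewrite (uinj _ _ xC yC E) eqxx.
      by move/negP: (mC _ (vin y yC)); apply; rewrite -E uin.
    case: E => E.
      by move/negP: (mC _ (vin x xC)); apply; rewrite E uin.
    by move: nxy; rewrite (vinj _ _ xC yC (can_inj mm E)) eqxx.
  + exact: d12.
  + by rewrite disjoint_sym; apply: d12.
  + move: fM2 gM2; rewrite !inE => /andP [fM0 _] /andP [gM0 _].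
    by apply: (matchingP _ _ mM0).2.
- apply/setP => z; rewrite inE; apply/bigcupP.
  case: (boolP (z \in C)) => zC.
    move: zC; rewrite -{1}uC => /imsetP [x xC ->].
    exists [set u x; m (v x)]; last by rewrite set21.
    by rewrite inE; apply/orP; left; apply: imset_f.
  case: (boolP (m z \in C)) => mzC.
    move: mzC; rewrite -{1}vC => /imsetP [x xC ex].
    exists [set u x; m (v x)]; last by rewrite -ex mm set22.
    by rewrite inE; apply/orP; left; apply: imset_f.
  exists [set z; m z]; last by rewrite set21.
  rewrite inE; apply/orP; right; rewrite /M2 inE; apply/andP; split.
    by rewrite /M0; apply: imset_f.
  by apply/dsjP => w /set2P [->|->]; apply/negP.
- apply/negP => /eqP E.
  have [x xC] : exists x, x \in C by apply/set0Pn.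
  have : [set u x; m (v x)] \in M0.
    by rewrite -E inE; apply/orP; left; apply: imset_f.
  case/andP: (H x xC) => nuv _.
  move=> /imsetP [w _ /set2_eq [[e1 e2]|[e1 e2]]].
    by move: nuv; rewrite e1 -(can_inj mm e2) eqxx.
  by move: nuv; rewrite e1 -e2 mm eqxx.
Qed.

Lemma ump_perfect (T : finType) (e : rel T) (M0 : {set {set T}}) :
  simple_graph e -> no_isolated e -> maximum_matching e M0 ->
  (forall M', maximum_matching e M' -> M' = M0) -> cover M0 = setT.
Proof.
move=> [sym irr] noi mx uq.
have [mM0 /forallP mxP] := andP mx.
apply/eqP; rewrite eqEsubset subsetT /=; apply/subsetP => w _.
apply/negPn/negP => wc.
have [u ewu] := noi w.
have wnotin : forall f, f \in M0 -> w \notin f.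
  by move=> f fM; apply/negP => wf; move/negP: wc; apply; apply/bigcupP; exists f.
have wuM : [set w; u] \notin M0.
  by apply/negP => H; move: (wnotin _ H); rewrite set21.
have edge : is_edge e [set w; u].
  by apply/existsP; exists w; apply/existsP; exists u; rewrite ewu eqxx.
case: (boolP (u \in cover M0)) => uc.
  have [f fM uf] := bigcupP uc.
  pose M1 := [set w; u] |: (M0 :\ f).
  have mM1 : matching e M1.
    apply/matchingP; split.
      move=> g /setU1P [->//|]; rewrite inE => /andP [_ gM].
      by apply: (matchingP _ _ mM0).1.
    have dj : forall g, g \in M0 :\ f -> [disjoint [set w; u] & g].
      move=> g; rewrite !inE => /andP [ngf gM]; apply/dsjP => z /set2P [->|->] zg.
        by move/negP: (wnotin _ gM).
      by move/dsjP: ((matchingP _ _ mM0).2 _ _ gM fM ngf) => /(_ u zg uf).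
    move=> g h /setU1P [->|gM] /setU1P [->|hM] ne.
    + by move: ne; rewrite eqxx.
    + exact: dj.
    + by rewrite disjoint_sym; apply: dj.
    + move: gM hM; rewrite !inE => /andP [_ gM] /andP [_ hM].
      by apply: (matchingP _ _ mM0).2.
  have cM1 : #|M1| = #|M0|.
    have nin : [set w; u] \notin M0 :\ f by rewrite inE negb_and wuM orbT.
    by rewrite /M1 cardsU1 nin (cardsD1 f M0) fM.
  have mx1 : maximum_matching e M1.
    apply/andP; split => //; apply/forallP => M'; apply/implyP => mM'.
    by rewrite cM1; apply: (implyP (mxP M')).
  by move/negP: wuM; apply; rewrite -(uq _ mx1) setU11.
pose M1 := [set w; u] |: M0.
have mM1 : matching e M1.
  apply/matchingP; split.
    by move=> g /setU1P [->//|gM]; apply: (matchingP _ _ mM0).1.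
  have dj : forall g, g \in M0 -> [disjoint [set w; u] & g].
    move=> g gM; apply/dsjP => z /set2P [->|->] zg.
      by move/negP: (wnotin _ gM).
    by move/negP: uc; apply; apply/bigcupP; exists g.
  move=> g h /setU1P [->|gM] /setU1P [->|hM] ne.
  + by move: ne; rewrite eqxx.
  + exact: dj.
  + by rewrite disjoint_sym; apply: dj.
  + by apply: (matchingP _ _ mM0).2.
have := implyP (mxP M1) mM1.
by rewrite cardsU1 wuM add1n ltnn.
Qed.

Lemma psi_char (T : finType) (e : rel T) (m : T -> T) (A : {set T}) :
  simple_graph e -> well_covered e -> #|T| = 2 * alpha e ->
  (forall x, e x (m x)) -> (forall x, m (m x) = x) ->
  (A \in Psi e) = stable e A && [forall x in A, forall y, e x y ==> (m y \in A)].
Proof.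
move=> sg wc cT em mm; rewrite in_Psi; apply/idP/idP.
  move=> lm; apply/andP; split; first by case/andP: lm.
  apply/forall_inP => x xA; apply/forallP => y; apply/implyP => exy.
  exact: (psi_closed sg wc cT em mm lm xA exy).
move=> /andP [sA /forall_inP cl]; apply: (closed_psi (proj1 sg) em mm sA).
by move=> x y xA exy; move: (cl x xA) => /forallP /(_ y) /implyP; apply.
Qed.

Lemma ump_greedoid (T : finType) (e : rel T) :
  simple_graph e -> very_well_covered e -> unique_maximum_matching e ->
  greedoid (Psi e).
Proof.
move=> sg [wc noi cT] [M0 [mx uq]].
have [sym irr] := sg.
have cM0 := ump_perfect sg noi mx uq.
have [m [em mm E0]] := perfect_partner sg (proj1 (andP mx)) cM0.
have Hno : forall (C : {set T}) (u v : T -> T), stable e C -> C != set0 ->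
    u @: C = C -> v @: C = C ->
    (forall x, x \in C -> (u x != v x) && e (u x) (m (v x))) -> False.
  move=> C u v sC C0 uC vC H.
  have [M' [mM' cM' ne]] := second_matching sg em mm sC C0 uC vC H.
  by move: ne; rewrite -E0 (uq _ (perfect_maximum irr mM' cM')) eqxx.
have ch := fun A => psi_char A sg wc cT em mm.
have clP : forall A x y, A \in Psi e -> x \in A -> e x y -> m y \in A.
  move=> A x y; rewrite ch => /andP [_ /forall_inP cl] xA exy.
  by move: (cl x xA) => /forallP /(_ y) /implyP; apply.
have mkP : forall A, stable e A -> (forall x y, x \in A -> e x y -> m y \in A) -> A \in Psi e.
  move=> A sA cl; rewrite ch sA /=; apply/forall_inP => x xA; apply/forallP => y.
  by apply/implyP; apply: cl.
have stP : forall A, A \in Psi e -> stable e A by move=> A; rewrite ch => /andP [].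
split.
- apply/set0Pn; exists set0; apply: mkP; first exact: stable0.
  by move=> x y; rewrite inE.
- move=> A AP A0.
  case: (boolP [forall x in A, exists a in A, (a != x) && e a (m x)]) => [/forall_inP H|].
    pose p x := odflt x [pick a in A | (a != x) && e a (m x)].
    have pP : forall x, x \in A -> [&& p x \in A, p x != x & e (p x) (m x)].
      move=> x xA; rewrite /p; case: pickP => [a /andP [aA /andP [nax eam]]|N] /=.
        by rewrite aA nax eam.
      by move/exists_inP: (H x xA) => [a aA aP]; move: (N a); rewrite aA aP.
    have [C [CA C0 pC]] := min_closed A0 (fun x xA => proj1 (andP (pP x xA))).
    exfalso; apply: (Hno C p id) => //.
    + by apply: stable_sub CA (stP A AP).
    + exact: imset_id.
    + by move=> x xC; case/and3P: (pP x (subsetP CA x xC)) => _ -> ->.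
  move=> /forall_inPn [x xA /exists_inPn H].
  exists x => //; apply: mkP.
    by apply: stable_sub (stP A AP); apply: subsetDl.
  move=> b y /setD1P [nbx bA] eby; rewrite !inE (clP A b y AP bA eby) andbT.
  apply/negP => /eqP emy.
  have ey : y = m x by rewrite -emy mm.
  by move: (H b bA); rewrite nbx -ey eby.
- move=> X Y XP YP cXY.
  pose Q := [set x in X | (x \notin Y) && (m x \notin Y)].
  have QX : Q \subset X by apply/subsetP => x; rewrite inE => /andP [].
  have Q0 : Q != set0.
    apply/negP => /eqP Q0.
    have : #|X| <= #|Y|.
      apply: (count_pairs em mm (stP X XP)) => b bX.
      apply/negPn/negP => Hb; rewrite negb_or in Hb.
      have : b \in Q by rewrite inE bX Hb.
      by rewrite Q0 inE.
    by rewrite cXY ltnn.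
  case: (boolP [forall x in Q, exists z in Q, (z != x) && e x (m z)]) => [/forall_inP H|].
    pose s x := odflt x [pick z in Q | (z != x) && e x (m z)].
    have sP : forall x, x \in Q -> [&& s x \in Q, s x != x & e x (m (s x))].
      move=> x xQ; rewrite /s; case: pickP => [a /andP [aQ /andP [nax eam]]|N] /=.
        by rewrite aQ nax eam.
      by move/exists_inP: (H x xQ) => [a aQ aP]; move: (N a); rewrite aQ aP.
    have [C [CQ C0 sC]] := min_closed Q0 (fun x xQ => proj1 (andP (sP x xQ))).
    exfalso; apply: (Hno C id s) => //.
    + by apply: stable_sub (subset_trans CQ QX) (stP X XP).
    + exact: imset_id.
    + move=> x xC; case/and3P: (sP x (subsetP CQ x xC)) => _ nsx ->.
      by rewrite andbT eq_sym.
  move=> /forall_inPn [x xQ /exists_inPn H].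
  move: (xQ); rewrite inE => /andP [xX /andP [xY mxY]].
  exists x; first by rewrite inE xY xX.
  have cross : forall y, y \in Y -> ~~ e x y.
    move=> y yY; apply/negP => exy; move/negP: mxY; apply.
    by apply: (clP Y y x YP yY); rewrite sym.
  apply: mkP.
    apply: stableU => //; [exact: stable1 | exact: stP Y YP |].
    by move=> a b /set1P -> bY; apply: cross.
  move=> a w /setU1P [->|aY] eaw; last by rewrite inE (clP Y a w YP aY eaw) orbT.
  have zX : m w \in X := clP X x w XP xX eaw.
  case: (boolP (m w \in Y)) => zY; first by rewrite inE zY orbT.
  case: (boolP (m (m w) \in Y)) => mzY.
    by move: (cross _ mzY); rewrite mm eaw.
  have zQ : m w \in Q by rewrite inE zX zY mzY.
  by move: (H (m w) zQ); rewrite mm eaw andbT negbK => /eqP ->; apply: setU11.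
Qed.

Lemma greedoid_ump (T : finType) (e : rel T) :
  simple_graph e -> very_well_covered e -> greedoid (Psi e) ->
  unique_maximum_matching e.
Proof.
move=> sg [wc noi cT] gr.
have [sym irr] := sg.
have [M [mM cM]] := greedoid_perfect sg (And3 wc noi cT) gr.
have [m [em mm EM]] := perfect_partner sg mM cM.
exists M; split; first exact: perfect_maximum irr mM cM.
move=> M' mx'.
have cM' := maximum_cover irr mM cM mx'.
have [m' [em' mm' EM']] := perfect_partner sg (proj1 (andP mx')) cM'.
have [_ acc _] := gr.
pose O := [set x | m (m' x) != x].
have key : forall n (A : {set T}), #|A| = n -> A \in Psi e -> [disjoint A & O].
  elim=> [|n IH] A cA AP.
    by rewrite (cards0_eq cA) disjoints_subset sub0set.
  have A0 : A != set0 by rewrite -card_gt0 cA.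
  have [x xA BP] := acc A AP A0.
  have cB : #|A :\ x| = n by move: cA; rewrite (cardsD1 x A) xA add1n => [[]].
  have dB := IH _ cB BP.
  apply/dsjP => z zA zO.
  case: (eqVneq z x) => [ezx|nzx]; last first.
    by move/dsjP: dB => H; apply: (H z) => //; rewrite !inE nzx zA.
  subst z.
  have lm : local_max_stable e A by rewrite -in_Psi.
  have exm : e x (m (m (m' x))) by rewrite mm em'.
  have gA := psi_closed sg wc cT em mm lm xA exm; rewrite mm in gA.
  have gO : m (m' x) \in O.
    rewrite inE; apply/negP => /eqP E.
    have E2 : m' (m (m' x)) = m' x by rewrite -(mm (m' (m (m' x)))) E mm.
    have E3 : m (m' x) = x := can_inj mm' E2.
    by move: zO; rewrite inE E3 eqxx.
  have nx : m (m' x) != x by move: zO; rewrite inE.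
  by move/dsjP: dB => H; apply: (H (m (m' x))) => //; rewrite !inE nx gA.
have eq : m' =1 m.
  move=> x; apply/eqP; apply/negPn/negP => ne.
  have xO : x \in O.
    rewrite inE; apply/negP => /eqP E; move/negP: ne; apply.
    by rewrite -{2}E mm.
  have [W mW sub] := maximal_ext (stable1 x irr).
  have cW := maximal_stable_card wc mW.
  have WP : W \in Psi e.
    by rewrite in_Psi; apply: maximum_local => //; case/andP: mW.
  move/dsjP: (key _ W (erefl _) WP) => /(_ x); rewrite xO (subsetP sub) ?set11 //.
  by move=> /(_ isT isT).
by rewrite EM EM'; apply: eq_imset => x; rewrite eq.
Qed.

Unset Implicit Arguments.

Theorem theorem10 (T : finType) (e : rel T) :
  simple_graph e -> very_well_covered e -> triangle_free e ->
  (greedoid (Psi e) <-> unique_maximum_matching e).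
Proof.
move=> sg vwc _; split; [exact: greedoid_ump | exact: ump_greedoid].
Qed.
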